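(* Let a liquidity provider hold $x$ units of numeraire and $y$ units of a yield token paying a random amount $Y$ (in numeraire) at maturity, and have a concave, increasing utility $U_P$ over terminal wealth, so her terminal wealth is $x+yY$. For $\Delta>0$ let $p(\Delta)$ be the minimum price she is willing to receive per unit to sell $\Delta$ yield tokens, i.e. the price $p$ with $\mathbb{E}[U_P(x+yY+\Delta(p-Y))]=\mathbb{E}[U_P(x+yY)]$. If $\Delta_1<\Delta_2$, then $p(\Delta_1)<p(\Delta_2)$.
   Context: Expectations are with respect to the liquidity provider's belief distribution over $Y$. *)

(* Defs.v *)
From HB Require Import structures.
From mathcomp Require Import all_boot all_order all_algebra.
From mathcomp Require Import all_classical all_reals all_analysis.
Set Implicit Arguments. Unset Strict Implicit. Unset Printing Implicit Defensive.
Import Order.TTheory GRing.Theory Num.Theory.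
Local Open Scope classical_set_scope.
Local Open Scope ring_scope.

Definition strictly_concave (R : realType) (U : R -> R) : Prop :=
  forall a b t : R, a != b -> 0 < t < 1 ->
    t * U a + (1 - t) * U b < U (t * a + (1 - t) * b).

Definition strictly_increasing (R : realType) (U : R -> R) : Prop :=
  forall a b : R, a < b -> U a < U b.

Definition indifference_price {d} {T : measurableType d} {R : realType}
  (P : probability T R) (U : R -> R) (x y : R) (Y : T -> R) (Delta p : R) : Prop :=
  P.-integrable setT (EFin \o (fun w => U (x + y * Y w))) /\
  P.-integrable setT (EFin \o (fun w => U (x + y * Y w + Delta * (p - Y w)))) /\
  ('E_P[fun w => U (x + y * Y w + Delta * (p - Y w))%R]
     = 'E_P[fun w => U (x + y * Y w)%R])%E.

(* Main.v *)
Require Import Defs.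
From HB Require Import structures.
From mathcomp Require Import all_boot all_order all_algebra.
From mathcomp Require Import all_classical all_reals all_analysis.
From mathcomp Require Import ring lra.
Import Order.TTheory GRing.Theory Num.Theory.
Local Open Scope classical_set_scope.
Local Open Scope ring_scope.

Theorem lemma15 (d : measure_display) (T : measurableType d) (R : realType)
  (P : probability T R) (Y : T -> R) (U : R -> R) (x y : R)
  (mY : measurable_fun setT Y)
  (nondegY : forall c : R, (0 < P [set w | Y w != c])%E)
  (Uconc : strictly_concave U) (Uinc : strictly_increasing U)
  (Delta1 Delta2 p1 p2 : R) :
  0 < Delta1 -> Delta1 < Delta2 ->
  indifference_price P U x y Y Delta1 p1 ->
  indifference_price P U x y Y Delta2 p2 ->
  p1 < p2.
Proof.
move=> D1 D12 [i0 [i1 e1]] [_ [i2 e2]].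
rewrite ltNge; apply/negP => p21.
set t := Delta1 / Delta2.
have D2 : 0 < Delta2 by apply: lt_trans D12.
have t0 : 0 < t by rewrite divr_gt0.
have t1 : t < 1 by rewrite ltr_pdivrMr // mul1r.
set f0 := fun w => U (x + y * Y w).
set f1 := fun w => U (x + y * Y w + Delta1 * (p1 - Y w)).
set f2 := fun w => U (x + y * Y w + Delta2 * (p2 - Y w)).
set h := fun w => f1 w - (t * f2 w + (1 - t) * f0 w).
have Uleq : forall a b, a <= b -> U a <= U b.
  move=> a b; rewrite le_eqVlt => /orP[/eqP -> //|/Uinc /ltW //].
have key : forall w, U (t * (x + y * Y w + Delta2 * (p2 - Y w)) + (1 - t) * (x + y * Y w))
     <= f1 w.
  move=> w; apply: Uleq.
  have -> : t * (x + y * Y w + Delta2 * (p2 - Y w)) + (1 - t) * (x + y * Y w)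
     = x + y * Y w + Delta1 * (p2 - Y w).
    have tD : t * Delta2 = Delta1 by rewrite /t divfK // gt_eqF.
    rewrite -tD; ring.
  rewrite lerD2l; apply: ler_wpM2l; first exact: ltW.
  by rewrite lerD2r.
have hge0 : forall w, 0 <= h w.
  move=> w; rewrite /h subr_ge0; apply: le_trans (key w).
  have [e|ne] := eqVneq (x + y * Y w + Delta2 * (p2 - Y w)) (x + y * Y w).
    have E : forall a : R, t * a + (1 - t) * a = a by move=> a; ring.
    by rewrite /f2 /f0 e !E.
  by apply/ltW; apply: Uconc => //; rewrite t0 t1.
have hgt0 : forall w, Y w != p2 -> 0 < h w.
  move=> w ne; rewrite /h subr_gt0; apply: lt_le_trans (key w).
  apply: Uconc => //; last by rewrite t0 t1.
  rewrite -subr_eq0 addrAC subrr add0r mulf_eq0 negb_or gt_eqF //=.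
  by rewrite subr_eq0 eq_sym.
have ih2 : P.-integrable setT (EFin \o (fun w => t * f2 w + (1 - t) * f0 w)).
  have -> : EFin \o (fun w => t * f2 w + (1 - t) * f0 w) =
     ((fun w => t%:E * (EFin \o f2) w) \+ (fun w => (1 - t)%:E * (EFin \o f0) w))%E.
    by apply/funext => w /=; rewrite EFinD !EFinM.
  by apply: integrableD => //; apply: integrableZl.
have ih : P.-integrable setT (EFin \o h).
  have -> : EFin \o h = ((EFin \o f1) \- (EFin \o (fun w => t * f2 w + (1 - t) * f0 w)%R))%E.
    by apply/funext => w /=; rewrite -EFinD.
  by apply: integrableB.
have int0 : (\int[P]_w (EFin \o h) w = 0)%E.
  have -> : (\int[P]_w (EFin \o h) w = \int[P]_w ((f1 w)%:E - ((t * f2 w + (1 - t) * f0 w)%R)%:E))%E.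
    by apply: eq_integral => w _; rewrite /= /h EFinB.
  rewrite integralB_EFin //.
  have -> : (\int[P]_w (t * f2 w + (1 - t) * f0 w)%:E =
    \int[P]_w (t%:E * (f2 w)%:E + (1 - t)%:E * (f0 w)%:E))%E.
    by apply: eq_integral => w _ /=; rewrite EFinD !EFinM.
  rewrite integralD //; last 2 first.
    exact: (integrableZl measurableT t i2).
    exact: (integrableZl measurableT (1 - t) i0).
  have Z2 : (\int[P]_w (t%:E * (f2 w)%:E) = t%:E * \int[P]_w (f2 w)%:E)%E :=
    integralZl measurableT i2 t.
  have Z0 : (\int[P]_w ((1 - t)%:E * (f0 w)%:E) = (1 - t)%:E * \int[P]_w (f0 w)%:E)%E :=
    integralZl measurableT i0 (1 - t).
  rewrite Z2 Z0.
  move: e1 e2; rewrite unlock => e1 e2.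
  have -> : (\int[P]_w (f1 w)%:E = \int[P]_w (f0 w)%:E)%E by exact: e1.
  have -> : (\int[P]_w (f2 w)%:E = \int[P]_w (f0 w)%:E)%E by exact: e2.
  have F : (\int[P]_w (f0 w)%:E)%E \is a fin_num := integrable_fin_num measurableT i0.
  rewrite -(fineK F) -!EFinM -EFinD; congr EFin; ring.
have [N [mN PN sub]] : exists N, [/\ measurable N, P N = 0%E &
    [set w | Y w != p2] `<=` N].
  have := (ae_eq_integral_abs P measurableT (measurable_int P ih)).1.
  have -> : (\int[P]_w `|(EFin \o h) w| = \int[P]_w (EFin \o h) w)%E.
    by apply: eq_integral => w _; rewrite gee0_abs // lee_fin.
  move=> /(_ int0) [N [mN PN sub]]; exists N; split => // w /= ne.
  apply: sub => /= /(_ I) /eqP; rewrite eqe; apply/negP.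
  by rewrite gt_eqF // hgt0.
have := nondegY p2.
rewrite (_ : P [set w | Y w != p2] = 0%E) ?ltxx //.
apply/eqP; rewrite -measure_le0 -PN; apply: le_measure => //; rewrite inE //.
rewrite (_ : [set w | Y w != p2] = setT `&` Y @^-1` (~` [set p2])).
  by apply: mY => //; apply: measurableC.
rewrite setTI; apply/seteqP; split => w /=; first by move/eqP.
by move/eqP.
Qed.
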